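(* Let $(T_1,T_2,T_3,T_4)$ be an ordered binary forest on $\{1,\dots,m\}$, let $x_i=|L(T_i)|$ for $i=1,2,3,4$, and assume $x_1\ge x_2$, $x_3\ge x_4$ and $x_1>x_3$. Let $T_0$ be the binary phylogenetic tree with root $z$ having children $a$ and $b$, where $a$ has children the roots of $T_1$ and $T_2$, and $b$ has children the roots of $T_3$ and $T_4$. Let $n\ge m$ and let $T$ be a binary phylogenetic tree with $n$ leaves having $T_0$ as the subtree rooted at some node. If $\Phi(T)$ is minimum among all binary phylogenetic trees with $n$ leaves, then $x_4\ge x_2$.
   Context: A phylogenetic tree on a finite set $S$ is a rooted tree whose leaves are bijectively labeled by $S$, every internal node having at least two children; binary means exactly two children; a tree with $n$ leaves is one on $\{1,\dots,n\}$. $L(T)$ is the leaf set. An ordered binary $k$-forest on $S$ is a sequence of $k$ binary phylogenetic trees on pairwise disjoint sets with union $S$. The subtree rooted at a node $v$ is the subgraph induced on the descendants of $v$. The depth $\delta_T(v)$ is the number of arcs from the root to $v$; for leaves $i\ne j$, $\varphi_T(i,j)=\delta_T(LCA_T(i,j))$ ($LCA$ = lowest common ancestor), and $\Phi(T)$ is the sum of $\varphi_T(i,j)$ over all unordered pairs of distinct leaves. *)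

(* Defs.v *)
From mathcomp Require Import all_boot.
Set Implicit Arguments. Unset Strict Implicit. Unset Printing Implicit Defensive.

(* Children order is immaterial: see [tiso] and [Phi] (which is order-invariant). *)
Inductive btree : Type :=
| Leaf of nat
| Node of btree & btree.

Fixpoint leaves (t : btree) : seq nat :=
  match t with
  | Leaf x => [:: x]
  | Node l r => leaves l ++ leaves r
  end.

Definition bphylo_n (n : nat) (t : btree) : Prop :=
  perm_eq (leaves t) (iota 1 n).

Inductive subtree_at : btree -> btree -> Prop :=
| sub_refl t : subtree_at t t
| sub_l s l r : subtree_at s l -> subtree_at s (Node l r)
| sub_r s l r : subtree_at s r -> subtree_at s (Node l r).

Inductive tiso : btree -> btree -> Prop :=
| iso_leaf x : tiso (Leaf x) (Leaf x)
| iso_node l r l' r' : tiso l l' -> tiso r r' -> tiso (Node l r) (Node l' r')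
| iso_swap l r l' r' : tiso l r' -> tiso r l' -> tiso (Node l r) (Node l' r').

(* phi t i j = depth of LCA of leaves i and j (for distinct leaves of t). *)
Fixpoint phi (t : btree) (i j : nat) : nat :=
  match t with
  | Leaf _ => 0
  | Node l r =>
      if (i \in leaves l) && (j \in leaves l) then (phi l i j).+1
      else if (i \in leaves r) && (j \in leaves r) then (phi r i j).+1
      else 0
  end.

Definition Phi (t : btree) : nat :=
  \sum_(i <- leaves t) \sum_(j <- leaves t | i < j) phi t i j.

(* Main.v *)
Require Import Defs.
From mathcomp Require Import all_boot zify.

Definition np (s : seq nat) : nat := \sum_(i <- s) \sum_(j <- s | i < j) 1.

Lemma np_aux x s : x \notin s ->
  \sum_(j <- s | x < j) 1 + \sum_(i <- s) (i < x : nat) = size s.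
Proof.
elim: s => [|y s IH]; first by rewrite !big_nil.
rewrite inE negb_or => /andP [Hxy Hs].
rewrite !big_cons /= -(IH Hs).
case: (ltngtP x y) => H /=.
- lia.
- lia.
- by rewrite H eqxx in Hxy.
Qed.

Lemma np_bin s : uniq s -> np s = 'C(size s, 2).
Proof.
rewrite /np; elim: s => [|x s IH]; first by rewrite big_nil.
move=> /= /andP [Hx Hu].
rewrite big_cons /= ?ltnn.
have E : \sum_(i <- s) \sum_(j <- x :: s | i < j) 1
        = \sum_(i <- s) (i < x : nat) + \sum_(i <- s) \sum_(j <- s | i < j) 1.
  rewrite -big_split /=; apply: eq_bigr => i _; rewrite big_cons.
  by case: (i < x).
by rewrite E IH // binS bin1 -[X in _ = _ + X](@np_aux x s Hx) big_cons ltnn addnA addnC.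
Qed.

Definition sz (t : btree) : nat := size (leaves t).

Lemma Phi_node l r : uniq (leaves l ++ leaves r) ->
  Phi (Node l r) = Phi l + Phi r + 'C(sz l, 2) + 'C(sz r, 2).
Proof.
move=> U.
have Ul : uniq (leaves l) by move: U; rewrite cat_uniq => /and3P [].
have Ur : uniq (leaves r) by move: U; rewrite cat_uniq => /and3P [].
have D : forall i, i \in leaves l -> i \in leaves r -> False.
  move=> i Hl Hr; move: U; rewrite cat_uniq => /and3P [_ /hasP H _].
  by apply: H; exists i.
rewrite /sz -(np_bin _ Ul) -(np_bin _ Ur) /Phi /np /= big_cat /=.
have E1 : \sum_(i <- leaves l) \sum_(j <- leaves l ++ leaves r | i < j)
     (if (i \in leaves l) && (j \in leaves l) then (phi l i j).+1
      else if (i \in leaves r) && (j \in leaves r) then (phi r i j).+1 else 0)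
  = \sum_(i <- leaves l) \sum_(j <- leaves l | i < j) phi l i j
    + \sum_(i <- leaves l) \sum_(j <- leaves l | i < j) 1.
  rewrite -big_split /=; apply: eq_big_seq => i Hi.
  rewrite big_cat /= -big_split /=.
  rewrite [X in _ + X = _]big1_seq ?addn0; last first.
    move=> j /andP [_ Hj].
    have -> : (j \in leaves l) = false by apply/negP => Hjl; exact: (D j).
    have -> : (i \in leaves r) = false by apply/negP => Hir; exact: (D i).
    by rewrite andbF.
  rewrite big_seq_cond [RHS]big_seq_cond; apply: eq_bigr => j /andP [Hj _].
  by rewrite Hi Hj addn1.
have E2 : \sum_(i <- leaves r) \sum_(j <- leaves l ++ leaves r | i < j)
     (if (i \in leaves l) && (j \in leaves l) then (phi l i j).+1
      else if (i \in leaves r) && (j \in leaves r) then (phi r i j).+1 else 0)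
  = \sum_(i <- leaves r) \sum_(j <- leaves r | i < j) phi r i j
    + \sum_(i <- leaves r) \sum_(j <- leaves r | i < j) 1.
  rewrite -big_split /=; apply: eq_big_seq => i Hi.
  have Hil : (i \in leaves l) = false by apply/negP => Hil; exact: (D i).
  rewrite big_cat /= -big_split /=.
  rewrite [X in X + _ = _]big1_seq ?add0n; last first.
    move=> j /andP [_ Hj].
    have -> : (j \in leaves r) = false by apply/negP => Hjr; exact: (D j).
    by rewrite Hil andbF.
  rewrite big_seq_cond [RHS]big_seq_cond; apply: eq_bigr => j /andP [Hj _].
  by rewrite Hil Hi Hj addn1.
rewrite E1 E2.
have P1 : \sum_(i <- leaves l) \sum_(j <- leaves l | i < j) phi l i j = Phi l by [].
lia.
Qed.

Lemma subtree_uniq S T : subtree_at S T -> uniq (leaves T) -> uniq (leaves S).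
Proof.
elim=> [t|s l r _ IH|s l r _ IH] //=; rewrite cat_uniq => /and3P [H1 _ H2]; auto.
Qed.

Lemma replace S S' T : subtree_at S T -> perm_eq (leaves S) (leaves S') ->
  uniq (leaves T) ->
  exists T', perm_eq (leaves T') (leaves T) /\ Phi T + Phi S' = Phi T' + Phi S.
Proof.
move=> H; elim: H.
- move=> t P _; exists S'; split; [by rewrite perm_sym | lia].
- move=> s l r _ IH P U.
  have Ul : uniq (leaves l) by move: U; rewrite /= cat_uniq => /and3P [].
  have [l' [Pl E]] := IH P Ul.
  exists (Node l' r); split; first by rewrite /= perm_cat2r.
  have U' : uniq (leaves l' ++ leaves r) by rewrite (@perm_uniq _ _ (leaves l ++ leaves r)) // perm_cat2r.
  rewrite !Phi_node // /sz (perm_size Pl) -/(sz l) -/(sz r); lia.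
- move=> s l r _ IH P U.
  have Ur : uniq (leaves r) by move: U; rewrite /= cat_uniq => /and3P [].
  have [r' [Pr E]] := IH P Ur.
  exists (Node l r'); split; first by rewrite /= perm_cat2l.
  have U' : uniq (leaves l ++ leaves r') by rewrite (@perm_uniq _ _ (leaves l ++ leaves r)) // perm_cat2l.
  rewrite !Phi_node // /sz (perm_size Pr) -/(sz l) -/(sz r); lia.
Qed.

Lemma binD2 a b : 'C(a + b, 2) = 'C(a, 2) + a * b + 'C(b, 2).
Proof.
elim: b => [|b IH]; first by rewrite addn0 muln0 addn0 bin0n addn0.
rewrite addnS binS bin1 IH binS bin1; lia.
Qed.

Lemma notmin n T S S' : bphylo_n n T -> subtree_at S T ->
  (forall T' : btree, bphylo_n n T' -> Phi T <= Phi T') ->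
  perm_eq (leaves S) (leaves S') -> Phi S' < Phi S -> False.
Proof.
move=> B Sub Min P L.
have UT : uniq (leaves T) by rewrite (perm_uniq B) iota_uniq.
have [T' [P' E]] := @replace S S' T Sub P UT.
have := Min T' (perm_trans P' B); lia.
Qed.

Lemma sz_node l r : sz (Node l r) = sz l + sz r.
Proof. by rewrite /sz /= size_cat. Qed.

Lemma Phi4 A B C D : uniq (leaves A ++ leaves B ++ leaves C ++ leaves D) ->
  Phi (Node (Node A B) (Node C D)) = Phi A + Phi B + Phi C + Phi D
   + 2 * ('C(sz A, 2) + 'C(sz B, 2) + 'C(sz C, 2) + 'C(sz D, 2)) + sz A * sz B + sz C * sz D.
Proof.
move=> U.
have U2 : uniq (leaves (Node A B) ++ leaves (Node C D)) by rewrite /= -!catA.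
have [UAB UCD] : uniq (leaves A ++ leaves B) /\ uniq (leaves C ++ leaves D).
  by move: U2; rewrite cat_uniq => /and3P [].
rewrite Phi_node // Phi_node // Phi_node // !sz_node !binD2; lia.
Qed.

Lemma key n T A B C D : bphylo_n n T ->
  subtree_at (Node (Node A B) (Node C D)) T ->
  (forall T' : btree, bphylo_n n T' -> Phi T <= Phi T') ->
  sz A * sz B + sz C * sz D <= sz A * sz D + sz C * sz B /\ sz A * sz B + sz C * sz D <= sz A * sz C + sz B * sz D.
Proof.
move=> BT Sub Min.
have US : uniq (leaves (Node (Node A B) (Node C D))).
  by apply: subtree_uniq Sub _; rewrite (perm_uniq BT) iota_uniq.
have U : uniq (leaves A ++ leaves B ++ leaves C ++ leaves D) by move: US; rewrite /= -!catA.
split; rewrite leqNgt; apply/negP => H.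
- have P : perm_eq (leaves (Node (Node A B) (Node C D))) (leaves (Node (Node A D) (Node C B))).
    by apply/permP => p; rewrite /= !count_cat; lia.
  apply: (@notmin n T _ _ BT Sub Min P).
  have U' : uniq (leaves A ++ leaves D ++ leaves C ++ leaves B).
    rewrite -(@perm_uniq _ (leaves A ++ leaves B ++ leaves C ++ leaves D)) //.
    by apply/permP => p; rewrite /= !count_cat; lia.
  rewrite Phi4 // Phi4 //; lia.
- have P : perm_eq (leaves (Node (Node A B) (Node C D))) (leaves (Node (Node A C) (Node B D))).
    by apply/permP => p; rewrite /= !count_cat; lia.
  apply: (@notmin n T _ _ BT Sub Min P).
  have U' : uniq (leaves A ++ leaves C ++ leaves B ++ leaves D).
    rewrite -(@perm_uniq _ (leaves A ++ leaves B ++ leaves C ++ leaves D)) //.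
    by apply/permP => p; rewrite /= !count_cat; lia.
  rewrite Phi4 // Phi4 //; lia.
Qed.

Lemma tiso_sz s t : tiso s t -> sz s = sz t.
Proof. elim=> // *; rewrite !sz_node; lia. Qed.

Theorem mainTheorem8 (m n : nat) (T1 T2 T3 T4 T : btree) :
  perm_eq (leaves T1 ++ leaves T2 ++ leaves T3 ++ leaves T4) (iota 1 m) ->
  size (leaves T2) <= size (leaves T1) ->
  size (leaves T4) <= size (leaves T3) ->
  size (leaves T3) < size (leaves T1) ->
  m <= n ->
  bphylo_n n T ->
  (exists S, subtree_at S T /\ tiso S (Node (Node T1 T2) (Node T3 T4))) ->
  (forall T' : btree, bphylo_n n T' -> Phi T <= Phi T') ->
  size (leaves T2) <= size (leaves T4).
Proof.
move=> _ H21 H43 H31 _ BT [S [Sub Iso]] Min.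
change (size (leaves T1)) with (sz T1) in *.
change (size (leaves T2)) with (sz T2) in *.
change (size (leaves T3)) with (sz T3) in *.
change (size (leaves T4)) with (sz T4) in *.
rewrite leqNgt; apply/negP => H42.
have K : sz T3 * sz T2 + sz T1 * sz T4 < sz T1 * sz T2 + sz T3 * sz T4 by nia.
inversion Iso; subst; clear Iso;
match goal with H1 : tiso ?l (Node _ _), H2 : tiso ?r (Node _ _) |- _ =>
  inversion H1; inversion H2; subst; clear H1 H2 end;
have [k1 k2] := key _ _ _ _ _ _ BT Sub Min;
repeat match goal with H : tiso _ _ |- _ => rewrite (@tiso_sz _ _ H) in k1 k2; clear H end;
lia.
Qed.
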